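(* Let $u_1,\dots,u_m\in\mathbf{B}^d\subset\mathbb{R}^d$ and positive weights $c_1,\dots,c_m$ satisfy \[ \sum_{i=1}^m c_i\, u_i\otimes u_i=\mathrm{Id}_d\quad\text{and}\quad \sum_{i=1}^m c_i u_i=0. \] Let $K$ be the convex hull of $u_1,\dots,u_m$. Then $\mathbf{B}^d\subset\big(\sum_{i=1}^m c_i\big)\cdot K$.
   Context: $\mathbf{B}^d$ is the closed Euclidean unit ball in $\mathbb{R}^d$; $u\otimes u$ denotes the linear map $x\mapsto\langle u,x\rangle u$; $\mathrm{Id}_d$ is the identity on $\mathbb{R}^d$. *)

(* Defs.v *)
From mathcomp Require Import all_boot all_order all_algebra.
From mathcomp Require Import reals.
Set Implicit Arguments. Unset Strict Implicit. Unset Printing Implicit Defensive.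
Import Order.TTheory GRing.Theory Num.Theory.
Local Open Scope ring_scope.

Definition dotv {R : realType} {d : nat} (x y : 'rV[R]_d) : R :=
  \sum_(k < d) x 0 k * y 0 k.

Definition unit_ball {R : realType} {d : nat} (x : 'rV[R]_d) : Prop :=
  dotv x x <= 1.

(* u (x) u : the linear map x |-> <u,x> u *)
Definition tens {R : realType} {d : nat} (u : 'rV[R]_d) (x : 'rV[R]_d) : 'rV[R]_d :=
  dotv u x *: u.

Definition conv_hull {R : realType} {d m : nat} (u : 'I_m -> 'rV[R]_d)
  (x : 'rV[R]_d) : Prop :=
  exists lam : 'I_m -> R,
    (forall i, 0 <= lam i) /\ \sum_(i < m) lam i = 1 /\
    x = \sum_(i < m) lam i *: u i.

Definition dilate {R : realType} {d : nat} (s : R) (K : 'rV[R]_d -> Prop)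
  (x : 'rV[R]_d) : Prop :=
  exists y, K y /\ x = s *: y.

(* Main.v *)
Require Import Defs.
From mathcomp Require Import all_boot all_order all_algebra.
From mathcomp Require Import reals.
From mathcomp Require Import ring lra.
Import Order.TTheory GRing.Theory Num.Theory.
Local Open Scope ring_scope.

Lemma dotv_suml (R : realType) (d m : nat) (a : 'I_m -> R) (v : 'I_m -> 'rV[R]_d) x :
  dotv (\sum_(i < m) a i *: v i) x = \sum_(i < m) a i * dotv (v i) x.
Proof.
rewrite /dotv.
under eq_bigr do rewrite summxE big_distrl /=.
rewrite exchange_big /=; apply: eq_bigr => i _.
rewrite big_distrr /=; apply: eq_bigr => k _.
by rewrite mxE mulrA.
Qed.

Lemma dotv_ge (R : realType) (d : nat) (u x : 'rV[R]_d) :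
  unit_ball u -> unit_ball x -> 0 <= 1 + dotv u x.
Proof.
rewrite /unit_ball => hu hx.
have h : 0 <= dotv (u + x) (u + x).
  by rewrite /dotv; apply: sumr_ge0 => k _; rewrite -expr2 sqr_ge0.
have e : dotv (u + x) (u + x) = dotv u u + 2 * dotv u x + dotv x x.
  rewrite /dotv big_distrr -!big_split /=; apply: eq_bigr => k _.
  rewrite !mxE; ring.
lra.
Qed.

Theorem lemma4p1 (R : realType) (d m : nat) (u : 'I_m -> 'rV[R]_d) (c : 'I_m -> R)
  (hm : (0 < m)%N)
  (hu : forall i, unit_ball (u i))
  (hc : forall i, 0 < c i)
  (hid : forall x : 'rV[R]_d, \sum_(i < m) c i *: tens (u i) x = x)
  (hcent : \sum_(i < m) c i *: u i = 0) :
  forall x : 'rV[R]_d, unit_ball x -> dilate (\sum_(i < m) c i) (conv_hull u) x.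
Proof.
move=> x hx; set S := \sum_(i < m) c i.
have S0 : 0 < S.
  rewrite /S (bigD1 (Ordinal hm)) //=; apply: ltr_pwDl; first exact: hc.
  by apply: sumr_ge0 => i _; apply: ltW.
exists (S^-1 *: x); split; last by rewrite scalerA mulfV ?gt_eqF // scale1r.
exists (fun i => c i * (1 + dotv (u i) x) / S); split; [|split].
- move=> i; apply: divr_ge0; last exact: ltW.
  by apply: mulr_ge0; [exact: ltW | exact: dotv_ge].
- rewrite -mulr_suml.
  under eq_bigr do rewrite mulrDr mulr1.
  rewrite big_split /= -dotv_suml hcent.
  have -> : dotv 0 x = 0 :> R by rewrite /dotv big1 // => k _; rewrite mxE mul0r.
  by rewrite addr0 mulfV ?gt_eqF.
- rewrite -{1}(hid x) /tens scaler_sumr.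
  under [RHS]eq_bigr do rewrite mulrDr mulr1 mulrDl scalerDl.
  rewrite big_split /=.
  have -> : \sum_(i < m) c i / S *: u i = 0.
    transitivity (S^-1 *: \sum_(i < m) c i *: u i); last by rewrite hcent scaler0.
    rewrite scaler_sumr; apply: eq_bigr => i _.
    by rewrite scalerA mulrC.
  rewrite add0r; apply: eq_bigr => i _.
  by rewrite !scalerA; congr (_ *: _); rewrite mulrC.
Qed.
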